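(* Let $\mathcal{L}$ be a nonempty set and $\mathcal{C}: 2^{\mathcal{L}}\to 2^{\mathcal{L}}$ an L-logics. Then the relation $<^{+}$ on theories is irreflexive, and hence a strict partial order.
   Context: An L-logics is a map $\mathcal{C}: 2^{\mathcal{L}}\to 2^{\mathcal{L}}$ satisfying Inclusion ($A\subseteq\mathcal{C}(A)$ for all $A$) and Loop: for every $n\ge1$ and $A_0,\dots,A_{n-1}\subseteq\mathcal{L}$, if $A_i\subseteq\mathcal{C}(A_{i+1})$ for all $i=0,\dots,n-1$ (indices mod $n$) then $\mathcal{C}(A_0)=\mathcal{C}(A_1)$. A theory is a set $T\subseteq\mathcal{L}$ with $\mathcal{C}(T)=T$. For theories $T,S$: $T\le S$ iff there is $A\subseteq S$ with $\mathcal{C}(A)=T$; $T<S$ iff $T\le S$ and $S\not\le T$. $<^{+}$ is the transitive closure of $<$ on the set of theories. *)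

(* Defs.v *)
From Stdlib Require Import Relations.Relation_Operators.

Definition subset {L : Type} (A B : L -> Prop) : Prop := forall x, A x -> B x.
Definition seteq {L : Type} (A B : L -> Prop) : Prop := forall x, A x <-> B x.

(* An L-logics: Inclusion + Loop (indices mod n). *)
Definition L_logic {L : Type} (C : (L -> Prop) -> (L -> Prop)) : Prop :=
  (forall A, subset A (C A)) /\
  (forall (n : nat) (A : nat -> (L -> Prop)), 1 <= n ->
     (forall i, i < n -> subset (A i) (C (A (Nat.modulo (S i) n)))) ->
     seteq (C (A 0)) (C (A (Nat.modulo 1 n)))).

Definition theory {L : Type} (C : (L -> Prop) -> (L -> Prop)) (T : L -> Prop) : Prop :=
  seteq (C T) T.

Definition th_le {L : Type} (C : (L -> Prop) -> (L -> Prop)) (T S : L -> Prop) : Prop :=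
  exists A, subset A S /\ seteq (C A) T.

Definition th_lt {L : Type} (C : (L -> Prop) -> (L -> Prop)) (T S : L -> Prop) : Prop :=
  theory C T /\ theory C S /\ th_le C T S /\ ~ th_le C S T.

Definition th_lt_plus {L : Type} (C : (L -> Prop) -> (L -> Prop)) : (L -> Prop) -> (L -> Prop) -> Prop :=
  clos_trans (L -> Prop) (th_lt C).

(* Main.v *)
Require Import Defs.
From Stdlib Require Import Relations.Relation_Operators Relations.Operators_Properties Lia Arith.

Lemma chain_ex (L : Type) (C : (L -> Prop) -> (L -> Prop)) T U :
  clos_trans_1n (L -> Prop) (th_lt C) T U ->
  exists n (f : nat -> (L -> Prop)) (A : nat -> (L -> Prop)),
    1 <= n /\ f 0 = T /\ f n = U /\
    (forall i, i < n -> th_lt C (f i) (f (S i)) /\ subset (A i) (f (S i)) /\ seteq (C (A i)) (f i)).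
Proof.
  induction 1 as [x y H | x y z H H1 IH].
  - destruct H as (Hx & Hy & [B [HB1 HB2]] & Hnot).
    exists 1, (fun i => match i with 0 => x | _ => y end), (fun _ => B).
    split; [lia|]. split; [reflexivity|]. split; [reflexivity|].
    intros i Hi; assert (i = 0) by lia; subst.
    split; [refine (conj Hx (conj Hy (conj (ex_intro _ B (conj HB1 HB2)) Hnot))) | auto].
  - destruct IH as (n & f & A & Hn & Hf0 & Hfn & Hs).
    destruct H as (Hx & Hy & [B [HB1 HB2]] & Hnot).
    exists (S n), (fun i => match i with 0 => x | S j => f j end),
      (fun i => match i with 0 => B | S j => A j end).
    split; [lia|]. split; [reflexivity|]. split; [exact Hfn|].
    intros i Hi; destruct i as [|j].
    + rewrite Hf0. split; [refine (conj Hx (conj Hy (conj (ex_intro _ B (conj HB1 HB2)) Hnot))) | auto].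
    + apply Hs; lia.
Qed.

Theorem lemma19 (L : Type) (x0 : L) (C : (L -> Prop) -> (L -> Prop)) :
  L_logic C ->
  (forall T, theory C T -> ~ th_lt_plus C T T) /\
  (forall T S U, th_lt_plus C T S -> th_lt_plus C S U -> th_lt_plus C T U).
Proof.
  intros [Incl Loop]. split.
  - intros T HT Hc. apply clos_trans_t1n in Hc.
    destruct (chain_ex L C T T Hc) as (n & f & A & Hn & Hf0 & Hfn & Hs).
    assert (Heq : seteq (f 0) (f 1)).
    { destruct (Nat.eq_dec n 1) as [E|E].
      - subst n. rewrite Hfn, Hf0. intro; tauto.
      - assert (L1 := Loop n A Hn).
        assert (Hm : 1 mod n = 1) by (apply Nat.mod_small; lia).
        rewrite Hm in L1.
        assert (Hc2 : seteq (C (A 0)) (C (A 1))).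
        { apply L1. intros i Hi.
          destruct (Hs i Hi) as (Hlt & Hsub & _).
          destruct (Nat.eq_dec (S i) n) as [E2|E2].
          - rewrite E2, Nat.Div0.mod_same by lia. rewrite E2, Hfn in Hsub.
            destruct (Hs 0 ltac:(lia)) as (_ & _ & H0). rewrite Hf0 in H0.
            intros x Hx; apply H0; auto.
          - rewrite Nat.mod_small by lia.
            destruct (Hs (S i) ltac:(lia)) as (_ & _ & H1).
            intros x Hx; apply H1; auto. }
        destruct (Hs 0 ltac:(lia)) as (_ & _ & H0).
        destruct (Hs 1 ltac:(lia)) as (_ & _ & H1).
        intro x. split; intro Hx; [apply H1, Hc2, H0 | apply H0, Hc2, H1]; exact Hx. }
    destruct (Hs 0 ltac:(lia)) as ((Ht0 & Ht1 & _ & Hnot) & _).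
    apply Hnot. exists (f 0). split.
    + intros x Hx; exact Hx.
    + intro x. split; intro Hx; [apply Heq, Ht0, Hx | apply Ht0, Heq, Hx].
  - intros T S U H1 H2. eapply t_trans; eauto.
Qed.
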